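(* Let $\mathcal{W}$ be a periodic labeled wedge of period $p$ and preperiod $q$, with associated graph $\Gamma$, and for $k\in\mathbb{N}$ let $A_k$ be the adjacency operator of $\Gamma_k=\Gamma/\equiv_{kp,q}$. Then for every $k\in\mathbb{N}$, the characteristic polynomial of $A_k$ acting on $\mathbb{R}^{\mathcal{V}_k}$ is the product of the characteristic polynomial of $A_1$ acting on $\mathbb{R}^{\mathcal{V}_1}$, of cyclotomic polynomials, and of $x^d$ for some integer $d\ge0$.
   Context: The unlabeled wedge is $\Sigma=\{(i,j)\in\mathbb{N}^2:1\le i\le j\}$; a labeled wedge is a map $\Phi:\Sigma\to\{N,S,E\}$ (non-separated, separated, equivalent). Its graph $\Gamma$ has vertex set $\Sigma$ and edges: none out of an $E$-vertex; one edge $(i,j)\to(i+1,j+1)$ out of an $N$-vertex; two edges $(i,j)\to(1,i+1)$ and $(i,j)\to(1,j+1)$ out of an $S$-vertex. For integers $p\ge1$, $q\ge0$, $\equiv_{p,q}$ on $\mathbb{N}$ is: $i\equiv_{p,q}j$ iff $i=j$, or $\min\{i,j\}\ge q+1$ and $i\equiv j\pmod p$; on $\Sigma$, $(i,j)\equiv_{p,q}(k,l)$ iff ($i\equiv_{p,q}k$ and $j\equiv_{p,q}l$) or ($i\equiv_{p,q}l$ and $j\equiv_{p,q}k$). $\mathcal{W}$ is periodic of period $p$ and preperiod $q$ if (1) $\equiv_{p,q}$-equivalent vertices have the same label and (2) $(i,j)$ is labeled $E$ iff $i\equiv_{p,q}j$. For such $\mathcal{W}$ and $k\ge1$, $\Gamma_k$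 is the quotient graph: its vertex set $\mathcal{V}_k$ is the set of $\equiv_{kp,q}$-classes, and the number of edges from $[v]$ to $[w]$ is the number of edges in $\Gamma$ from $v$ to members of $[w]$ (independent of the representative $v$). The adjacency operator $A_k$ on $\mathbb{R}^{\mathcal{V}_k}$ is $A_k(e_v)=\sum_{w}\#(v\to w)\,e_w$. Characteristic polynomials are $\det(xI-A)$. *)

(* Defs.v *)
From HB Require Import structures.
From mathcomp Require Import all_boot all_order all_algebra all_field.
From mathcomp Require Import reals.
Set Implicit Arguments. Unset Strict Implicit. Unset Printing Implicit Defensive.
Import Order.TTheory GRing.Theory Num.Theory.

(* Labels: non-separated, separated, equivalent. *)
Inductive label := LN | LS | LE.

(* A labeled wedge: a labeling of pairs; only values on the unlabeled wedge
   Sigma = {(i,j) : 1 <= i <= j} matter. *)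
Definition labeling := nat -> nat -> label.

Definition in_wedge (v : nat * nat) : bool := (1 <= v.1) && (v.1 <= v.2).

Definition eqN (p q i j : nat) : bool :=
  (i == j) || ((q.+1 <= minn i j) && (i %% p == j %% p)).

Definition eqW (p q : nat) (v w : nat * nat) : bool :=
  (eqN p q v.1 w.1 && eqN p q v.2 w.2) || (eqN p q v.1 w.2 && eqN p q v.2 w.1).

Definition periodic (Phi : labeling) (p q : nat) : Prop :=
  (forall v w, in_wedge v -> in_wedge w -> eqW p q v w -> Phi v.1 v.2 = Phi w.1 w.2)
  /\ (forall v, in_wedge v -> (Phi v.1 v.2 = LE <-> eqN p q v.1 v.2)).

Definition out_edges (Phi : labeling) (v : nat * nat) : seq (nat * nat) :=
  match Phi v.1 v.2 with
  | LE => [::]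
  | LN => [:: (v.1.+1, v.2.+1)]
  | LS => [:: (1, v.1.+1); (1, v.2.+1)]
  end.

Definition nedges (Phi : labeling) (m q : nat) (v w : nat * nat) : nat :=
  count (fun t => eqW m q t w) (out_edges Phi v).

(* The vertex set V of Gamma / ==_{m,q}: each class has exactly one canonical
   representative (a,b) with 1 <= a <= b <= q + m; the ordinal pair (x1,x2)
   stands for the representative (x1+1, x2+1). *)
Definition qvert (n : nat) := {x : 'I_n * 'I_n | x.1 <= x.2}.

Definition qrep (n : nat) (x : qvert n) : nat * nat :=
  ((val x).1.+1, (val x).2.+1).

(* Matrix of the adjacency operator A (A e_v = sum_w #(v -> w) e_w),
   with respect to an enumeration of V; column v, row w. *)
Definition adjmx (R : realType) (Phi : labeling) (m q : nat)
  : 'M[R]_#|{: qvert (q + m)}| :=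
  \matrix_(i, j) ((nedges Phi m q (qrep (enum_val j)) (qrep (enum_val i)))%:R)%R.

Definition A_k (R : realType) (Phi : labeling) (p q k : nat) :=
  adjmx R Phi (k * p) q.

(* Main.v *)
Require Import Defs.
From HB Require Import structures.
From mathcomp Require Import all_boot all_order all_algebra all_field.
From mathcomp Require Import reals.
From mathcomp Require Import zify.
Import GRing.Theory.
Set Implicit Arguments. Unset Strict Implicit. Unset Printing Implicit Defensive.


Section NatLemmas.
Variable q : nat.

Definition clf (M i : nat) : nat := if i <= q then i.-1 else q + (i.-1 - q) %% M.

Lemma clf_lt M i : 0 < M -> clf M i < q + M.
Proof.
rewrite /clf => M0; case: (leqP i q) => Hi; first lia.
by rewrite ltn_add2l ltn_mod.
Qed.

Lemma clf_small M i : 0 < i -> i <= q + M -> clf M i = i.-1.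
Proof.
rewrite /clf => i0 iM; case: (leqP i q) => // Hi.
rewrite modn_small; lia.
Qed.

Lemma clf_ge M i : q < i -> q <= clf M i.
Proof. by rewrite /clf; case: (leqP i q) => //; lia. Qed.

Lemma clf_eqN M i j : 0 < M -> 0 < i -> 0 < j -> eqN M q i j = (clf M i == clf M j).
Proof.
move=> M0 i0 j0; rewrite /eqN /clf.
case: (leqP i q) => Hi; case: (leqP j q) => Hj.
- have -> : (q.+1 <= minn i j) = false by lia.
  rewrite andFb orbF; apply/eqP/eqP; lia.
- have -> : (q.+1 <= minn i j) = false by lia.
  rewrite andFb orbF; apply/eqP/eqP => H; first by lia.
  have := leq_addr ((j.-1 - q) %% M) q; lia.
- have -> : (q.+1 <= minn i j) = false by lia.
  rewrite andFb orbF; apply/eqP/eqP => H; first by lia.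
  have := leq_addr ((i.-1 - q) %% M) q; lia.
- have -> : (q.+1 <= minn i j) = true by lia.
  rewrite andTb eqn_add2l.
  have [x ->] : exists x, i = x + q.+1 by exists (i.-1 - q); lia.
  have [y ->] : exists y, j = y + q.+1 by exists (j.-1 - q); lia.
  rewrite !addnS /= !addnK -!addnS eqn_modDr eqn_add2r.
  by case: eqP => // ->; rewrite eqxx.
Qed.

Lemma clf_compat M i j : 0 < M -> 0 < i -> 0 < j -> clf M i = clf M j ->
  clf M i.+1 = clf M j.+1.
Proof.
move=> M0 i0 j0 /eqP H; apply/eqP; rewrite -clf_eqN //; move: H; rewrite -clf_eqN // /eqN.
case/orP => [/eqP -> | /andP [H1 H2]]; first by rewrite eqxx.
apply/orP; right; apply/andP; split.
  by move: H1; rewrite !leq_min => /andP [a b]; rewrite !ltnS (ltnW a) (ltnW b).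
by rewrite -[i.+1]addn1 -[j.+1]addn1 -modnDml (eqP H2) modnDml.
Qed.

Lemma clf_compatD M i j k : 0 < M -> 0 < i -> 0 < j -> clf M i = clf M j ->
  clf M (i + k) = clf M (j + k).
Proof.
move=> M0 i0 j0 H; elim: k => [|k IH]; first by rewrite !addn0.
rewrite !addnS; apply: clf_compat => //; by rewrite addn_gt0 ?i0 ?j0.
Qed.

Lemma clf_id M i : 0 < M -> 0 < i -> clf M (clf M i).+1 = clf M i.
Proof.
move=> M0 i0; rewrite clf_small //; exact: (clf_lt i M0).
Qed.

Lemma clf_pm p m t : 0 < p -> p %| m -> 0 < m -> 0 < t -> clf p t = clf p (clf m t).+1.
Proof.
move=> p0 pm m0 t0; rewrite /clf; case: (leqP t q) => Ht.
  by rewrite prednK // Ht.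
have -> : ((q + (t.-1 - q) %% m).+1 <= q) = false.
  by apply/negbTE; rewrite -ltnNge ltnS leq_addr.
rewrite /= addKn modn_dvdm //.
Qed.

End NatLemmas.

Lemma clf_addM q M i : q < i -> clf q M (i + M) = clf q M i.
Proof.
move=> qi; rewrite /clf.
have -> : (i + M <= q) = false by apply/negbTE; rewrite -ltnNge ltn_addr.
have -> : (i <= q) = false by apply/negbTE; rewrite -ltnNge.
have -> : (i + M).-1 - q = (i.-1 - q) + M by lia.
by rewrite modnDr.
Qed.

Lemma iter_per (T : Type) (f : T -> T) t i d : iter (i + d) f t = iter i f t ->
  forall r c, i <= r -> iter (r + c * d) f t = iter r f t.
Proof.
move=> H r c ir.
have Hi : forall c, iter (i + c * d) f t = iter i f t.
  elim=> [|c' IH']; first by rewrite mul0n addn0.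
  by rewrite mulSn addnA (addnC i d) -addnA iterD IH' -iterD addnC H.
have -> : r + c * d = (r - i) + (i + c * d) by lia.
by rewrite iterD Hi -iterD subnK.
Qed.

Lemma iter_fact (T : finType) (f : T -> T) t :
  iter (#|T| + #|T|`!) f t = iter #|T| f t.
Proof.
pose g (i : 'I_(#|T|.+1)) := iter i f t.
have : ~~ injectiveb g.
  apply/negP => /injectiveP inj; have := leq_card g inj; by rewrite card_ord ltnn.
move=> /injectivePn [i [j ij gij]].
wlog lt : i j ij gij / i < j.
  move=> W; case: (ltngtP i j) => h; first exact: W h.
    by apply: (W j i); rewrite 1?eq_sym.
  by move/eqP: ij; case; apply: val_inj.
have dT : 0 < j - i <= #|T| by have := ltn_ord j; lia.
have [c Hc] : exists c, #|T|`! = c * (j - i).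
  by exists (#|T|`! %/ (j - i)); rewrite divnK // dvdn_fact.
rewrite Hc; apply: (iter_per (i := i)) => //.
  by rewrite subnKC ?(ltnW lt).
by have := ltn_ord i; lia.
Qed.


Lemma sort_eq (a b c d : nat) : c <= d ->
  ((a == c) && (b == d)) || ((a == d) && (b == c)) = ((minn a b == c) && (maxn a b == d)).
Proof.
move=> cd; case: (leqP a b) => h.
  case: (a =P c); case: (b =P d); case: (a =P d); case: (b =P c) => //= *; exfalso; lia.
case: (a =P c); case: (b =P d); case: (a =P d); case: (b =P c) => //= *; exfalso; lia.
Qed.

Definition ev (T : finType) (y : T) : 'cV[rat]_#|{: T}| := delta_mx (enum_rank y) ord0.
Section Generic.
Local Open Scope ring_scope.
Variable T : finType.

Lemma mx_evP n (M1 M2 : 'M[rat]_(n, #|{: T}|)) :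
  (forall y, M1 *m ev y = M2 *m ev y) -> M1 = M2.
Proof.
move=> H; apply/matrixP => i j.
have := congr1 (fun X : 'M[rat]_(n,1) => X i 0) (H (enum_val j)).
by rewrite /ev enum_valK -!colE !mxE.
Qed.

Definition Fmx (U : finType) (f : T -> U) : 'M[rat]_(#|{: U}|, #|{: T}|) :=
  \matrix_(i, j) (f (enum_val j) == enum_val i)%:R.

Lemma Fmx_ev (U : finType) (f : T -> U) y : Fmx f *m ev y = ev (f y).
Proof.
apply/matrixP => i j; rewrite /ev -colE !mxE enum_rankK (ord1 j) eqxx andbT.
by rewrite -(inj_eq enum_val_inj) enum_rankK eq_sym.
Qed.

Lemma ev_entry (y : T) i : ev y i 0 = (enum_val i == y)%:R.
Proof. by rewrite /ev mxE eqxx andbT -(inj_eq enum_val_inj) enum_rankK. Qed.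
End Generic.

Section Vert.
Definition omin n (a b : 'I_n) : 'I_n := if (a <= b)%N then a else b.
Definition omax n (a b : 'I_n) : 'I_n := if (a <= b)%N then b else a.
Lemma omin_le n (a b : 'I_n) : (omin a b <= omax a b)%N.
Proof. by rewrite /omin /omax; case: (leqP a b) => // /ltnW. Qed.
Definition vp n (a b : 'I_n) : qvert n := exist _ (omin a b, omax a b) (omin_le a b).
Lemma val_omin n (a b : 'I_n) : val (omin a b) = minn a b.
Proof. by rewrite /omin /minn; case: (ltngtP a b). Qed.
Lemma val_omax n (a b : 'I_n) : val (omax a b) = maxn a b.
Proof. by rewrite /omax /maxn; case: (ltngtP a b). Qed.
Lemma omin_sym n (a b : 'I_n) : omin a b = omin b a.
Proof. by apply: val_inj; rewrite !val_omin minnC. Qed.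
Lemma omax_sym n (a b : 'I_n) : omax a b = omax b a.
Proof. by apply: val_inj; rewrite !val_omax maxnC. Qed.
Lemma vp_sym n (a b : 'I_n) : vp a b = vp b a.
Proof. by apply: val_inj; rewrite /= omin_sym omax_sym. Qed.
Lemma vp_val n (x : qvert n) : vp (val x).1 (val x).2 = x.
Proof.
apply: val_inj; case: x => [[a b] /= h]; rewrite /omin /omax /=.
by rewrite h.
Qed.
Lemma vp_minmax n n' (f : 'I_n -> 'I_n') a b : vp (f (omin a b)) (f (omax a b)) = vp (f a) (f b).
Proof. by rewrite /omin /omax; case: (leqP a b) => // _; rewrite vp_sym. Qed.
End Vert.


Section Quot.
Variable Phi : labeling.
Variable q : nat.

Definition oc M (hM : 0 < M) (t : nat) : 'I_(q + M) := Ordinal (clf_lt q t hM).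
Definition osucc M (hM : 0 < M) (c : 'I_(q + M)) := oc hM c.+2.
Definition o0 M (hM : 0 < M) := oc hM 1.
Definition vk M (hM : 0 < M) (t : nat * nat) : qvert (q + M) := vp (oc hM t.1) (oc hM t.2).
Definition lab n (a b : 'I_n) : label := Phi (omin a b).+1 (omax a b).+1.

Definition Amx M (hM : 0 < M) : 'M[rat]_#|{: qvert (q + M)}| :=
  \matrix_(i, j) ((nedges Phi M q (qrep (enum_val j)) (qrep (enum_val i)))%:R)%R.

Lemma val_oc M (hM : 0 < M) t : val (oc hM t) = clf q M t.
Proof. by []. Qed.

Lemma oc_ord M (hM : 0 < M) (c : 'I_(q + M)) : oc hM c.+1 = c.
Proof. by apply: val_inj; rewrite val_oc clf_small. Qed.

Lemma clf_ord M (c : 'I_(q + M)) : clf q M c.+1 = c.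
Proof. by rewrite clf_small. Qed.

Lemma eqW_vk M (hM : 0 < M) (v : nat * nat) (x : qvert (q + M)) :
  0 < v.1 -> 0 < v.2 -> eqW M q v (qrep x) = (vk hM v == x).
Proof.
move=> h1 h2; rewrite /eqW /qrep /= !clf_eqN // !clf_ord.
rewrite sort_eq; last by case: x => [[a b] /= ->].
rewrite -(vp_val x) /vk -val_eqE /= xpair_eqE -!val_eqE /= !val_omin !val_omax.
by case: x => [[a b] /= h].
Qed.

Lemma out_pos (v : nat * nat) : all (fun t => (0 < t.1) && (0 < t.2)) (out_edges Phi v).
Proof. by rewrite /out_edges; case: (Phi v.1 v.2). Qed.

Lemma Amx_ev M (hM : 0 < M) y :
  (Amx hM *m ev y = \sum_(t <- out_edges Phi (qrep y)) ev (vk hM t))%R.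
Proof.
apply/matrixP => i j; rewrite /ev -colE !mxE summxE (ord1 j).
rewrite /nedges; have := out_pos (qrep y).
rewrite enum_rankK.
elim: (out_edges Phi (qrep y)) => [|t s IH]; first by move=> _; rewrite big_nil.
rewrite /= big_cons => /andP [/andP [t1 t2] hs]; rewrite natrD IH //.
rewrite eqW_vk // mxE eqxx andbT; congr (_ + _)%R.
by rewrite -(inj_eq enum_val_inj) enum_rankK eq_sym.
Qed.

Lemma Astep M (hM : 0 < M) (a b : 'I_(q + M)) :
  (Amx hM *m ev (vp a b))%R = match lab a b with
    | LE => 0%R
    | LN => ev (vp (osucc hM a) (osucc hM b))
    | LS => (ev (vp (o0 hM) (osucc hM a)) + ev (vp (o0 hM) (osucc hM b)))%R end.
Proof.
rewrite Amx_ev /out_edges /qrep /= /lab.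
case: (Phi (omin a b).+1 (omax a b).+1).
- by rewrite big_cons big_nil addr0 /vk /= -/(osucc hM _) vp_minmax.
- rewrite !big_cons big_nil addr0 /vk /= -/(o0 hM) -!/(osucc hM _).
  by rewrite /omin /omax; case: (leqP a b) => // _; rewrite addrC.
- by rewrite big_nil.
Qed.

End Quot.



Section Proj.
Variable Phi : labeling.
Variables q p m : nat.
Hypotheses (hp : 0 < p) (hm : 0 < m) (pm : p %| m) (hper : periodic Phi p q).
Local Notation Vm := (qvert (q + m)).
Local Notation Vp := (qvert (q + p)).

Definition psi (c : 'I_(q + m)) : 'I_(q + p) := oc q hp c.+1.
Definition piv (x : Vm) : Vp := vp (psi (val x).1) (psi (val x).2).
Definition iota (c : 'I_(q + p)) : 'I_(q + m) := oc q hm c.+1.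
Definition iotav (w : Vp) : Vm := vp (iota (val w).1) (iota (val w).2).

Lemma piv_vp a b : piv (vp a b) = vp (psi a) (psi b).
Proof. exact: vp_minmax. Qed.
Lemma iotav_vp a b : iotav (vp a b) = vp (iota a) (iota b).
Proof. exact: vp_minmax. Qed.

Lemma psi_os c : psi (osucc hm c) = osucc hp (psi c).
Proof.
apply: val_inj; rewrite /= -clf_pm //; symmetry.
apply: clf_compat => //; exact: clf_id.
Qed.

Lemma psi_o0 : psi (o0 q hm) = o0 q hp.
Proof. by apply: val_inj; rewrite /= -clf_pm. Qed.

Lemma psi_iota c : psi (iota c) = c.
Proof. by apply: val_inj; rewrite /= -clf_pm // clf_ord. Qed.

Lemma piv_iotav w : piv (iotav w) = w.
Proof. by rewrite /iotav piv_vp !psi_iota vp_val. Qed.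

Lemma lab_psi (a b : 'I_(q + m)) : lab Phi a b = lab Phi (psi a) (psi b).
Proof.
rewrite /lab; apply: (hper.1 ((omin a b).+1, (omax a b).+1)
  ((omin (psi a) (psi b)).+1, (omax (psi a) (psi b)).+1)).
- by rewrite /in_wedge /= ltnS omin_le.
- by rewrite /in_wedge /= ltnS omin_le.
rewrite /eqW /= !clf_eqN // !clf_ord sort_eq; last exact: omin_le.
rewrite !val_omin !val_omax /=.
by rewrite /omin /omax; case: (leqP a b) => _ //; rewrite minnC maxnC !eqxx.
Qed.

Local Open Scope ring_scope.
Definition Pm := Fmx piv.
Definition Sm := Fmx iotav.
Local Notation Am := (Amx Phi q hm).
Local Notation Ap := (Amx Phi q hp).

Lemma PA : Pm *m Am = Ap *m Pm.
Proof.
apply: mx_evP => y; rewrite -(vp_val y) -!mulmxA /Pm (Fmx_ev piv) piv_vp !Astep -lab_psi.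
case: (lab Phi _ _); rewrite ?mulmx0 ?mulmxDr ?(Fmx_ev piv) ?piv_vp ?psi_os ?psi_o0 //.
Qed.

Lemma PS : Pm *m Sm = 1%:M.
Proof. by apply: mx_evP => w; rewrite -mulmxA (Fmx_ev iotav) (Fmx_ev piv) piv_iotav mul1mx. Qed.


Definition bplus (b : 'I_(q + m)) : 'I_(q + m) := oc q hm (b.+1 + p).

Lemma psi_bplus (b : 'I_(q + m)) : (q <= b)%N -> psi (bplus b) = psi b.
Proof. by move=> qb; apply: val_inj; rewrite /= -clf_pm // ?clf_addM // addn_gt0. Qed.

Lemma lab_bplus (a b : 'I_(q + m)) : (q <= b)%N -> lab Phi a (bplus b) = lab Phi a b.
Proof. by move=> qb; rewrite lab_psi [RHS]lab_psi psi_bplus. Qed.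

Lemma os_bplus (b : 'I_(q + m)) : osucc hm (bplus b) = bplus (osucc hm b).
Proof.
apply: val_inj => /=.
have t0 : (0 < b.+1 + p)%N by rewrite addn_gt0.
have e1 := clf_compat hm (ltn0Sn _) t0 (clf_id q hm t0).
have e2 := clf_compatD p hm (ltn0Sn _) (ltn0Sn _) (clf_id q hm (ltn0Sn b.+1)).
by rewrite e1 e2 addSn.
Qed.

Lemma os_ge (b : 'I_(q + m)) : (q <= b)%N -> (q <= osucc hm b)%N.
Proof. by move=> qb; apply: clf_ge; rewrite ltnS ltnW. Qed.

Definition hv (a b : 'I_(q + m)) := ev (vp a (bplus b)) - ev (vp a b).
Definition St := option ('I_(q + m) * 'I_(q + m)).
Definition step (t : St) : St :=
  if t is Some (a, b) then
    match lab Phi a b with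
    | LE => None
    | LN => Some (osucc hm a, osucc hm b)
    | LS => Some (o0 q hm, osucc hm b)
    end
  else None.
Definition hT (t : St) := if t is Some (a, b) then hv a b else 0.
Definition valid (t : St) := if t is Some (a, b) then (q <= b)%N else true.

Lemma stepP t : valid t -> valid (step t) /\ Am *m hT t = hT (step t).
Proof.
case: t => [[a b]|] /=; last by rewrite mulmx0.
move=> qb; rewrite /hv mulmxBr !Astep lab_bplus //.
case: (lab Phi a b) => /=; rewrite ?os_ge //.
- by rewrite /hv os_bplus.
- by rewrite /hv os_bplus opprD addrACA subrr add0r.
- by rewrite subrr.
Qed.

Lemma iterP t j : valid t -> Am ^+ j *m hT t = hT (iter j step t).
Proof.
elim: j t => [|j IH] t vt; first by rewrite expr0 mul1mx.
have [vs hs] := stepP vt.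
by rewrite exprSr -mulmxE -mulmxA hs IH // iterSr.
Qed.

Definition NN := #|{: St}|.
Definition Gm := Am ^+ (NN + NN`!) - Am ^+ NN.

Lemma G_hT t : valid t -> Gm *m hT t = 0.
Proof.
by move=> vt; rewrite /Gm mulmxBl !iterP // /NN iter_fact subrr.
Qed.

Lemma fiber (a b : 'I_(q + m)) : Gm *m (ev (vp a b) - ev (vp a (iota (psi b)))) = 0.
Proof.
case: (ltnP b q) => qb.
  have -> : iota (psi b) = b.
    apply: val_inj => /=; rewrite (@clf_small q p b.+1) //; last by rewrite ltn_addr.
    exact: clf_ord.
  by rewrite subrr mulmx0.
have bm : (b < q + m)%N := ltn_ord b.
pose r := (b - q)%N; pose r0 := (r %% p)%N; pose j0 := (r %/ p)%N.
have er : r = (r0 + j0 * p)%N by rewrite /r0 /j0 addnC -divn_eq.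
pose cj (j : nat) : 'I_(q + m) := oc q hm (q + r0 + j * p).+1.
have vcj j : (j <= j0)%N -> val (cj j) = (q + r0 + j * p)%N.
  move=> hj; rewrite /= clf_small //.
  have : (j * p <= j0 * p)%N by rewrite leq_mul2r hj orbT.
  lia.
have stp j : (j < j0)%N -> cj j.+1 = bplus (cj j).
  move=> hj; apply: val_inj; rewrite [RHS]/= vcj ?(ltnW hj) //=.
  have hb : (j.+1 * p <= j0 * p)%N by rewrite leq_mul2r hj orbT.
  move: hb; rewrite mulSn => hb.
  have br : (b - q < m)%N by lia.
  rewrite (@clf_small q m (q + r0 + j * p).+1); [|lia|lia].
  rewrite clf_small; [lia|lia|lia].
have ind : forall j, (j <= j0)%N -> Gm *m (ev (vp a (cj j)) - ev (vp a (cj 0%N))) = 0.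
  elim => [|j IH] hj; first by rewrite subrr mulmx0.
  rewrite stp //.
  have -> : ev (vp a (bplus (cj j))) - ev (vp a (cj 0%N))
     = hv a (cj j) + (ev (vp a (cj j)) - ev (vp a (cj 0%N))) by rewrite /hv addrA subrK.
  rewrite mulmxDr IH ?(ltnW hj) // addr0.
  apply: (G_hT (t := Some (a, cj j))); rewrite /valid vcj ?(ltnW hj) //; lia.
have rdef : r = (b - q)%N by [].
have e1 : cj j0 = b.
  apply: val_inj; rewrite vcj //; have vb : val b = nat_of_ord b by []; lia.
have e2 : cj 0%N = iota (psi b).
  apply: val_inj => /=; congr (clf q m _); rewrite mul0n addn0 /clf.
  have -> : (b.+1 <= q)%N = false by apply/negbTE; rewrite -ltnNge ltnS.
  by [].
by rewrite -e2 -e1; apply: ind.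
Qed.

Lemma GSP : Gm *m (1%:M - Sm *m Pm) = 0.
Proof.
apply: mx_evP => y; rewrite mul0mx -mulmxA [(1%:M - _) *m _]mulmxBl mul1mx -mulmxA /Pm /Sm (Fmx_ev piv) (Fmx_ev iotav).
rewrite -(vp_val y) piv_vp iotav_vp.
set a := (val y).1; set b := (val y).2.
have -> : ev (vp a b) - ev (vp (iota (psi a)) (iota (psi b)))
  = (ev (vp a b) - ev (vp a (iota (psi b)))) +
    (ev (vp (iota (psi b)) a) - ev (vp (iota (psi b)) (iota (psi a)))).
  by rewrite (vp_sym (iota (psi b)) a) (vp_sym (iota (psi b))) addrA subrK.
by rewrite mulmxDr !fiber addr0.
Qed.

Lemma card_le : (#|{: Vp}| <= #|{: Vm}|)%N.
Proof. exact: (leq_card iotav (can_inj piv_iotav)). Qed.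

End Proj.

Local Open Scope ring_scope.

Section LA.
Variable F : fieldType.
Local Open Scope ring_scope.

Lemma exK n1 r (P : 'M[F]_(n1, n1 + r)) (S : 'M_(n1 + r, n1)) : P *m S = 1%:M ->
  exists K : 'M_(n1 + r, r), P *m K = 0 /\ row_mx S K \in unitmx.
Proof.
move=> PS.
have rP : \rank P^T = n1.
  rewrite mxrank_tr; apply/eqP; rewrite eqn_leq rank_leq_row /=.
  by rewrite -{1}(mxrank1 F n1) -PS mxrankM_maxl.
have rk : \rank (kermx P^T) = r by rewrite mxrank_ker rP addKn.
pose K0 := castmx (rk, erefl) (row_base (kermx P^T)) : 'M_(r, n1 + r).
have fK0 : row_free K0 by rewrite row_free_castmx row_base_free.
have K0P : K0 *m P^T = 0.
  apply/sub_kermxP; rewrite eqmx_cast eq_row_base; exact: submx_refl.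
exists K0^T; split.
  by rewrite -[P]trmxK -trmx_mul K0P trmx0.
rewrite -unitmx_tr -row_free_unit; apply/inj_row_free => v.
rewrite tr_row_mx trmxK -[v]hsubmxK mul_row_col => H.
have := congr1 (mulmx^~ P^T) H.
rewrite mulmxDl -!mulmxA K0P -trmx_mul PS trmx1 mulmx1 mulmx0 addr0 mul0mx => vu0.
move: H; rewrite vu0 mul0mx add0r => /eqP; rewrite mulmx_free_eq0 // => /eqP ->.
by rewrite row_mx0.
Qed.

Lemma char_poly_conj n (A T : 'M[F]_n) : T \in unitmx ->
  char_poly (invmx T *m A *m T) = char_poly A.
Proof.
move=> uT; rewrite /char_poly /char_poly_mx.
have -> : 'X%:M - map_mx polyC (invmx T *m A *m T)
   = map_mx polyC (invmx T) *m ('X%:M - map_mx polyC A) *m map_mx polyC T.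
  rewrite mulmxBr mulmxBl mul_mx_scalar -scalemxAl -map_mxM mulVmx // map_mx1 scalemx1.
  by rewrite !map_mxM.
rewrite !det_mulmx !det_map_mx mulrC mulrA -rmorphM -det_mulmx mulmxV //.
by rewrite det1 rmorph1 mul1r.
Qed.

Lemma char_poly_lblock n1 n2 (A1 : 'M[F]_n1) (C : 'M_(n2, n1)) (Y : 'M_n2) :
  char_poly (block_mx A1 0 C Y) = char_poly A1 * char_poly Y.
Proof.
rewrite /char_poly /char_poly_mx map_block_mx scalar_mx_block.
rewrite opp_block_mx add_block_mx raddf0 !oppr0 add0r.
by rewrite det_lblock.
Qed.

Lemma LA1 n1 r (A : 'M[F]_(n1 + r)) (A1 : 'M_n1) (P : 'M_(n1, n1 + r))
  (S : 'M_(n1 + r, n1)) (N L : nat) :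
  P *m S = 1%:M -> P *m A = A1 *m P ->
  (A ^+ (N + L) - A ^+ N) *m (1%:M - S *m P) = 0 ->
  exists Y : 'M_r, char_poly A = char_poly A1 * char_poly Y /\ Y ^+ (N + L) = Y ^+ N.
Proof.
move=> PS PA HG.
have [K [PK uT]] := exK PS.
set T := row_mx S K in uT.
pose M := invmx T *m A *m T.
have AT : A *m T = T *m M by rewrite /M !mulmxA mulmxV // mul1mx.
have PT : P *m T = row_mx 1%:M 0 by rewrite mul_mx_row PS PK.
have eM : M = block_mx (ulsubmx M) (ursubmx M) (dlsubmx M) (drsubmx M) by rewrite submxK.
have H1 : row_mx A1 0 = row_mx (ulsubmx M) (ursubmx M).
  have := congr1 (mulmx P) AT.
  rewrite mulmxA PA -mulmxA PT [P *m (T *m M)]mulmxA PT mul_mx_row mulmx0 eM mul_row_block.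
  by rewrite !mul1mx !mul0mx !addr0 mulmx1 -eM.
have [e1 e2] := eq_row_mx H1.
exists (drsubmx M); split.
  by rewrite -(char_poly_conj A uT) -/M {1}eM -e1 -e2 char_poly_lblock.
have AK : A *m K = K *m drsubmx M.
  have := congr1 (mulmx^~ (col_mx 0 1%:M)) AT.
  have McM : M *m col_mx 0 1%:M = col_mx 0 (drsubmx M).
    by rewrite {1}eM mul_block_col !mulmx0 !mulmx1 !add0r -e2.
  by rewrite -mulmxA /T mul_row_col mulmx0 add0r mulmx1 -mulmxA McM mul_row_col mulmx0 add0r.
have AKj j : A ^+ j *m K = K *m (drsubmx M) ^+ j.
  elim: j => [|j IH]; first by rewrite !expr0 mul1mx mulmx1.
  by rewrite !exprS -!mulmxE -mulmxA IH mulmxA AK -mulmxA.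
have KP : (1%:M - S *m P) *m K = K by rewrite mulmxBl mul1mx -mulmxA PK mulmx0 subr0.
have : K *m (drsubmx M ^+ (N + L) - drsubmx M ^+ N) = 0.
  by rewrite mulmxBr -!AKj -mulmxBl -KP mulmxA HG mul0mx.
move=> KZ.
have : T *m col_mx 0 (drsubmx M ^+ (N + L) - drsubmx M ^+ N) = 0.
  by rewrite /T mul_row_col mulmx0 add0r KZ.
move/(congr1 (mulmx (invmx T))); rewrite mulmxA mulVmx // mul1mx mulmx0.
rewrite -col_mx0 => /eq_col_mx [_ /eqP]; rewrite subr_eq0 => /eqP.
done.
Qed.
Lemma LA2 n n1 (A : 'M[F]_n) (A1 : 'M_n1) (P : 'M_(n1, n))
  (S : 'M_(n, n1)) (N L : nat) : (n1 <= n)%N ->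
  P *m S = 1%:M -> P *m A = A1 *m P ->
  (A ^+ (N + L) - A ^+ N) *m (1%:M - S *m P) = 0 ->
  exists r (Y : 'M_r), char_poly A = char_poly A1 * char_poly Y /\ Y ^+ (N + L) = Y ^+ N.
Proof.
move=> len; have [r e] : exists r, n = (n1 + r)%N by exists (n - n1)%N; rewrite subnKC.
subst n => PS PA HG; have [Y HY] := LA1 PS PA HG; by exists r, Y.
Qed.
End LA.

Section CFsec.
Local Open Scope ring_scope.
Local Open Scope ring_scope.

Lemma map_mxXn (R1 R2 : nzRingType) (f : {rmorphism R1 -> R2}) r (A : 'M[R1]_r) j :
  map_mx f (A ^+ j) = (map_mx f A) ^+ j.
Proof.
elim: j => [|j IH]; first by rewrite !expr0 map_mx1.
by rewrite !exprS -!mulmxE map_mxM IH.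
Qed.

Lemma roots_Y r (Y : 'M[rat]_r) N L : Y ^+ (N + L) = Y ^+ N ->
  forall z : algC, root (map_poly ratr (char_poly Y)) z -> z = 0 \/ z ^+ L = 1.
Proof.
move=> HY z; rewrite map_char_poly -eigenvalue_root_char => /eigenvalueP [v vY v0].
have vYj j : v *m (map_mx ratr Y) ^+ j = z ^+ j *: v.
  elim: j => [|j IH]; first by rewrite !expr0 mulmx1 scale1r.
  by rewrite exprSr -mulmxE mulmxA IH -scalemxAl vY scalerA -exprSr.
have := vYj (N + L); rewrite -map_mxXn HY map_mxXn vYj => /eqP.
rewrite -subr_eq0 -scalerBl scaler_eq0 (negbTE v0) orbF subr_eq0 exprD => /eqP H.
have [->|z0] := eqVneq z 0; first by left.
right; apply: (mulfI (expf_neq0 N z0)); by rewrite mulr1.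
Qed.

Lemma QPhi_root n (z : algC) : n.-primitive_root z ->
  forall Q : {poly rat}, root (map_poly ratr Q) z -> map_poly intr 'Phi_n %| Q.
Proof.
move=> pz Q rQ.
have [p [Dp _] Hp] := minCpolyP z.
have -> : map_poly intr 'Phi_n = p.
  apply: (@map_inj_poly _ _ (ratr : rat -> algC)); first exact: fmorph_inj.
    by rewrite rmorph0.
  rewrite -Dp (minCpoly_cyclotomic pz) -(Cintr_Cyclotomic pz) -map_poly_comp.
  by apply: eq_map_poly => x /=; rewrite ratr_int.
by rewrite -Hp.
Qed.

Lemma CF (L : nat) : (0 < L)%N -> forall Q : {poly rat}, Q \is monic ->
  (forall z : algC, root (map_poly ratr Q) z -> z = 0 \/ z ^+ L = 1) ->
  exists (s : seq nat) (d : nat), all (fun n => (0 < n)%N) s /\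
    Q = \prod_(n <- s) map_poly intr 'Phi_n * 'X^d.
Proof.
move=> L0 Q.
have [k lek] := ubnP (size Q); elim: k Q lek => // k IH Q lek mQ HQ.
have [s1|s2] := leqP (size Q) 1.
  exists [::], 0%N; split => //; rewrite big_nil expr0 mulr1.
  have Q0 : Q != 0 by apply: monic_neq0.
  have sQ : size Q = 1%N by apply/eqP; rewrite eqn_leq s1 lt0n size_poly_eq0.
  move/eqP: sQ => /size_poly1P [c _ DQ]; move: mQ; rewrite DQ monicE lead_coefC.
  by move/eqP ->.
have : size (map_poly (ratr : rat -> algC) Q) != 1%N.
  by rewrite size_map_poly gtn_eqF.
move=> /closed_rootP [z rz].
have [Q' [F [DQ DF mQ' sQ' HQ']]] : exists Q' F : {poly rat}, [/\ Q = Q' * F,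
  (F = 'X \/ exists2 n, (0 < n)%N & F = map_poly intr 'Phi_n), Q' \is monic,
  (size Q' < size Q)%N &
  (forall z : algC, root (map_poly ratr Q') z -> z = 0 \/ z ^+ L = 1)].
  have gen (Q' F : {poly rat}) : Q = Q' * F -> F \is monic -> (1 < size F)%N ->
     [/\ Q' \is monic, (size Q' < size Q)%N &
      (forall z : algC, root (map_poly ratr Q') z -> z = 0 \/ z ^+ L = 1)].
    move=> DQ mF sF.
    have mQ' : Q' \is monic by rewrite -(monicMr _ mF) -DQ.
    split => //.
      rewrite DQ size_Mmonic ?monic_neq0 //.
      move: sF; clear; lia.
    move=> z' rz'; apply: HQ; by rewrite DQ rmorphM rootM rz'.
  have [z0|zL] := HQ z rz.
    have r0 : root Q 0.
      by rewrite -(fmorph_root (ratr : {rmorphism rat -> algC})) rmorph0 -z0.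
    move: r0 => /factor_theorem [q Dq]; exists q, 'X.
    have DQ : Q = q * 'X by rewrite Dq polyC0 subr0.
    have sX : (1 < size ('X : {poly rat}))%N by rewrite size_polyX.
    have [h1 h2 h3] := gen q 'X DQ (monicX _) sX.
    by split => //; left.
  have [n pz _] := prim_order_exists L0 zL.
  have n0 := prim_order_gt0 pz.
  have /dvdpP [q Dq] := QPhi_root pz rz.
  have mF : map_poly (intr : int -> rat) 'Phi_n \is monic by apply: monic_map; exact: Cyclotomic_monic.
  have sF : (1 < size (map_poly (intr : int -> rat) 'Phi_n))%N.
    by rewrite size_map_inj_poly ?size_Cyclotomic ?ltnS ?totient_gt0 //; exact: intr_inj.
  have [h1 h2 h3] := gen q _ Dq mF sF.
  exists q, (map_poly intr 'Phi_n); split => //; right; by exists n.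
have [s [d [s0 DQ']]] := IH Q' (leq_trans sQ' (ltnSE lek)) mQ' HQ'.
case: DF => [DF | [n n0 DF]].
  by exists s, d.+1; split => //; rewrite DQ DQ' DF exprSr mulrA.
exists (n :: s), d; split; first by rewrite /= n0.
by rewrite DQ DQ' DF big_cons mulrAC; congr (_ * _); rewrite mulrC.
Qed.

End CFsec.

Lemma adjmx_Amx (R : realType) Phi M q (hM : (0 < M)%N) :
  adjmx R Phi M q = map_mx (ratr : rat -> R) (Amx Phi q hM).
Proof. by apply/matrixP => i j; rewrite !mxE ratr_nat. Qed.

Local Open Scope ring_scope.

Theorem theorem5p1 (R : realType) (Phi : labeling) (p q : nat)
  (hp : (0 < p)%N) (hper : periodic Phi p q) (k : nat) (hk : (0 < k)%N) :
  exists (s : seq nat) (d : nat),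
    all (fun n => (0 < n)%N) s /\
    char_poly (A_k R Phi p q k) =
      char_poly (A_k R Phi p q 1)
      * \prod_(n <- s) map_poly (intr : int -> R) 'Phi_n
      * 'X^d.
Proof.
have hm : (0 < k * p)%N by rewrite muln_gt0 hk hp.
have pm : (p %| k * p)%N by apply: dvdn_mull; exact: dvdnn.
rewrite /A_k mul1n (adjmx_Amx R Phi q hm) (adjmx_Amx R Phi q hp).
have [r [Y [eY HY]]] := LA2 (card_le q hp hm pm) (PS q hp hm pm) (PA hp hm pm hper)
  (GSP hp hm pm hper).
have L0 : (0 < (NN q (k * p))`!)%N := fact_gt0 _.
have [s [d [s0 eQ]]] := CF L0 (char_poly_monic Y) (roots_Y HY).
exists s, d; split => //.
rewrite -!map_char_poly eY eQ !rmorphM /= rmorph_prod map_polyXn /=.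
rewrite mulrA; congr (_ * _ * _); apply: eq_bigr => n _; rewrite -map_poly_comp.
by apply: eq_map_poly => x /=; rewrite ratr_int.
Qed.
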